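(* Let $(G,\cdot,\curlywedge,\xi,\delta)$ satisfy the standing assumptions below. A non-empty subset $H\subseteq G$ is $f_\xi$-closed if and only if for all $x,y,g_1,g_2\in G$: (i) $xy\in H\Rightarrow x\in H$; (ii) $g_1\vdash g_2\wedge g_1\in H\Rightarrow g_1g_2\in H$; (iii) $g_1\curlywedge g_2=g_1\in H\Rightarrow g_2\in H$; (iv) $g_1\downarrow g_2\wedge g_1\in H\wedge g_2x\in H\Rightarrow (g_1\curlywedge g_2)x\in H$, where in (iv) $x$ may also be the empty symbol (i.e. (iv) also holds with $x$ deleted).
   Context: Standing assumptions: $(G,\cdot)$ is a semigroup, $(G,\curlywedge)$ a semilattice on $G$, $\xi,\delta\subseteq G\times G$. Write $x\leqslant y$ iff $x\curlywedge y=x$ (semilattice order $\zeta$), $x\downarrow y$ iff $(x,y)\in\xi$, $x\vdash y$ iff $(x,y)\in\delta$. Assume $\xi$ is left regular ($(u,v)\in\xi\Rightarrow(xu,xv)\in\xi$), $\zeta\subseteq\xi$, $\delta$ is a left ideal ($(x,y)\in\delta\Rightarrow(ux,y)\in\delta$), and for all $x,y,z,u,v\in G$: $x(y\curlywedge z)=xy\curlywedge xz$; $x\leqslant y\wedge u\leqslant v\wedge y\downarrow v\Rightarrow u\downarrow x$; $x\downarrow y\Rightarrow(x\curlywedge y)u=xu\curlywedge yu$. $G^*=G\cup\{e\}$ is $(G,\cdot)$ with a new identity $e$ adjoined, with conventions $e\leqslant e$, $e\vdash e$, $x\vdash e$ for all $x\in G$. $a\boxdot b\leqslant c$ abbreviates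 $a\vdash b\wedge ab\leqslant c$. A subset $H\subseteq G$ is $f_\xi$-closed if for all $x,y,t\in G^*$ and $z,u,v\in G$: $u\downarrow v\wedge(u\curlywedge v)x\boxdot y\leqslant zt\wedge u\in H\wedge vx\in H\Rightarrow z\in H$. *)

(* Defs.v *)
(* Standing assumptions on (G, mul, meet, xi, delta).
   le x y  :=  meet x y = x   (the semilattice order zeta)
   xi x y  is  x ↓ y ;  delta x y  is  x ⊢ y. *)
Definition sle {G : Type} (meet : G -> G -> G) (x y : G) : Prop := meet x y = x.

Record standing {G : Type} (mul meet : G -> G -> G) (xi delta : G -> G -> Prop)
  : Prop := {
  st_mul_assoc : forall x y z, mul x (mul y z) = mul (mul x y) z;
  st_meet_idem : forall x, meet x x = x;
  st_meet_comm : forall x y, meet x y = meet y x;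
  st_meet_assoc : forall x y z, meet x (meet y z) = meet (meet x y) z;
  st_xi_left_regular : forall x u v, xi u v -> xi (mul x u) (mul x v);
  st_zeta_sub_xi : forall x y, sle meet x y -> xi x y;
  st_delta_left_ideal : forall u x y, delta x y -> delta (mul u x) y;
  st_left_distr : forall x y z, mul x (meet y z) = meet (mul x y) (mul x z);
  st_order_xi : forall x y u v,
      sle meet x y -> sle meet u v -> xi y v -> xi u x;
  st_right_distr_xi : forall x y u,
      xi x y -> mul (meet x y) u = meet (mul x u) (mul y u)
}.

(* G* = G ∪ {e}, represented as option G with None = e (new identity). *)
Definition mulS {G : Type} (mul : G -> G -> G) (a b : option G) : option G :=
  match a, b with
  | None, _ => b
  | _, None => a
  | Some x, Some y => Some (mul x y)
  end.

Definition leS {G : Type} (meet : G -> G -> G) (a b : option G) : Prop :=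
  match a, b with
  | None, None => True
  | Some x, Some y => sle meet x y
  | _, _ => False
  end.

Definition vdashS {G : Type} (delta : G -> G -> Prop) (a b : option G) : Prop :=
  match a, b with
  | _, None => True
  | None, Some _ => False
  | Some x, Some y => delta x y
  end.

Definition boxdot_le {G : Type} (mul meet : G -> G -> G) (delta : G -> G -> Prop)
  (a b c : option G) : Prop :=
  vdashS delta a b /\ leS meet (mulS mul a b) c.

Definition f_xi_closed {G : Type} (mul meet : G -> G -> G) (xi delta : G -> G -> Prop)
  (H : G -> Prop) : Prop :=
  forall (x y t : option G) (z u v : G),
    xi u v ->
    boxdot_le mul meet delta (mulS mul (Some (meet u v)) x) y
              (mulS mul (Some z) t) ->
    H u ->
    (match mulS mul (Some v) x with Some w => H w | None => False end) ->
    H z.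

(* Main.v *)
Require Import Defs.

Theorem proposition4 (G : Type) (mul meet : G -> G -> G) (xi delta : G -> G -> Prop)
  (Hst : standing mul meet xi delta) (H : G -> Prop) (Hne : exists h, H h) :
  f_xi_closed mul meet xi delta H <->
  ((forall x y : G, H (mul x y) -> H x) /\
   (forall g1 g2 : G, delta g1 g2 -> H g1 -> H (mul g1 g2)) /\
   (forall g1 g2 : G, meet g1 g2 = g1 -> H g1 -> H g2) /\
   (forall g1 g2 x : G, xi g1 g2 -> H g1 -> H (mul g2 x) -> H (mul (meet g1 g2) x)) /\
   (forall g1 g2 : G, xi g1 g2 -> H g1 -> H g2 -> H (meet g1 g2))).
Proof.
  assert (idem := st_meet_idem _ _ _ _ Hst).
  assert (xrefl : forall a, xi a a).
  { intro a. apply (st_zeta_sub_xi _ _ _ _ Hst). unfold sle. apply idem. }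
  split.
  - intro C. unfold f_xi_closed in C.
    split; [|split; [|split; [|split]]].
    + intros x y Hxy.
      apply (C None None (Some y) x (mul x y) (mul x y) (xrefl _)); simpl; auto.
      split; simpl; auto. unfold sle. rewrite !idem. reflexivity.
    + intros g1 g2 Hd Hg.
      apply (C None (Some g2) None (mul g1 g2) g1 g1 (xrefl _)); simpl; auto.
      split; simpl; rewrite idem; auto. unfold sle. apply idem.
    + intros g1 g2 Hm Hg.
      apply (C None None None g2 g1 g1 (xrefl _)); simpl; auto.
      split; simpl; auto. rewrite idem. exact Hm.
    + intros g1 g2 x Hx H1 H2.
      apply (C (Some x) None None _ g1 g2 Hx); simpl; auto.
      split; simpl; auto. unfold sle. apply idem.
    + intros g1 g2 Hx H1 H2.
      apply (C None None None _ g1 g2 Hx); simpl; auto.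
      split; simpl; auto. unfold sle. apply idem.
  - intros [C1 [C2 [C3 [C4 C5]]]].
    intros x y t z u v Hx [Hd Hl] Hu Hv.
    set (w := mulS mul (Some (meet u v)) x) in *.
    assert (Hw : match w with Some a => H a | None => False end).
    { unfold w; destruct x as [x|]; simpl in *; auto. }
    assert (Hm : match mulS mul w y with Some a => H a | None => False end).
    { destruct w as [a|]; [|contradiction]. destruct y as [b|]; simpl in *; auto. }
    destruct (mulS mul w y) as [m|]; [|contradiction].
    destruct t as [t|]; simpl in Hl.
    + apply (C1 z t). apply (C3 m); assumption.
    + apply (C3 m); assumption.
Qed.
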